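(* Let $f^{\pm},g^{\pm}:\mathbb{R}^2\to\mathbb{R}$ and $H:\mathbb{R}^2\times\mathbb{R}\to\mathbb{R}$ be $C^2$, and consider for $\varepsilon>0$ the Filippov system $(\dot x,\dot y)=(f^{+},g^{+})(x,y)$ if $H(x,y,\varepsilon)>0$ and $(\dot x,\dot y)=(f^{-},g^{-})(x,y)$ if $H(x,y,\varepsilon)<0$. Assume $f^-(0)=g^-(0)=0$, $H(0)=0$, $H_x(0)=0$, $H_y(0)\ne0$, $$H_y(0)g^+(0)<0,\qquad g^-_x(0)\neq0,\qquad (f^-_x(0),g^-_x(0))\ \text{not parallel to}\ (f^+(0),g^+(0)).$$ Then there exist $r>0$, $\varepsilon_0>0$ such that for each $0<\varepsilon\le\varepsilon_0$ there is a unique point $(A(\varepsilon),B(\varepsilon))\in[-r,r]^2$ with $$H(A,B,\varepsilon)=0,\qquad H_x(A,B,\varepsilon)f^-(A,B)+H_y(A,B,\varepsilon)g^-(A,B)=0,$$ and $\varepsilon\mapsto(A(\varepsilon),B(\varepsilon))$ is $C^1$ with $(A(0),B(0))=(0,0)$. Moreover: 1) $(A'(0),B'(0))=\dfrac{H_\varepsilon(0)}{H_y(0)}\Big(\dfrac{g^-_y(0)}{g^-_x(0)},-1\Big)$. 2) $L\setminus\{(A(\varepsilon),B(\varepsilon))\}=L_{sliding}\cup L_{crossing}$, where $L=\{(x,y)\in[-r,r]^2:H(x,y,\varepsilon)=0\}$, $L_{sliding}=\{(x,y)\in L: H_xf^-+H_yg^->0\}$, $L_{crossing}=\{(x,y)\in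 L: H_xf^-+H_yg^-<0\}$ (with $H_x,H_y$ evaluated at $(x,y,\varepsilon)$ and $f^-,g^-$ at $(x,y)$). 3) The system $f^-(a,b)-\lambda f^+(a,b)=0$, $g^-(a,b)-\lambda g^+(a,b)=0$, $H(a,b,\varepsilon)=0$ has, near $(0,0,0)$, a unique $C^1$ solution $(a(\varepsilon),b(\varepsilon),\lambda(\varepsilon))$ with $(a,b,\lambda)(0)=0$, and $$(a'(0),b'(0),\lambda'(0))=\frac{H_\varepsilon(0)}{H_y(0)}\left(\frac{f^-_y(0)g^+(0)-g^-_y(0)f^+(0)}{f^-_x(0)g^+(0)-g^-_x(0)f^+(0)},\,-1,\,-\frac{f^-_x(0)g^-_y(0)-f^-_y(0)g^-_x(0)}{f^-_x(0)g^+(0)-g^-_x(0)f^+(0)}\right).$$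
   Context: Subscripts denote partial derivatives; ''$(0)$'' means evaluation at the origin (and $\varepsilon=0$ for $H$). The solutions $(a(\varepsilon),b(\varepsilon))$ of the system in 3) are the equilibria (pseudo-equilibria) of the Filippov sliding vector field on the switching curve $\{H=0\}$. *)

(* Defs.v *)
From Stdlib Require Export Reals.
Open Scope R_scope.

Definition cont2 (f : R -> R -> R) : Prop :=
  forall x y eps, 0 < eps -> exists d, 0 < d /\
    forall x' y', Rabs (x' - x) < d -> Rabs (y' - y) < d ->
      Rabs (f x' y' - f x y) < eps.

Definition cont3 (f : R -> R -> R -> R) : Prop :=
  forall x y z eps, 0 < eps -> exists d, 0 < d /\
    forall x' y' z', Rabs (x' - x) < d -> Rabs (y' - y) < d -> Rabs (z' - z) < d ->
      Rabs (f x' y' z' - f x y z) < eps.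

Definition is_dx2 (f fx : R -> R -> R) : Prop :=
  forall x y, derivable_pt_lim (fun t => f t y) x (fx x y).
Definition is_dy2 (f fy : R -> R -> R) : Prop :=
  forall x y, derivable_pt_lim (fun t => f x t) y (fy x y).

Definition is_dx3 (f fx : R -> R -> R -> R) : Prop :=
  forall x y z, derivable_pt_lim (fun t => f t y z) x (fx x y z).
Definition is_dy3 (f fy : R -> R -> R -> R) : Prop :=
  forall x y z, derivable_pt_lim (fun t => f x t z) y (fy x y z).
Definition is_dz3 (f fz : R -> R -> R -> R) : Prop :=
  forall x y z, derivable_pt_lim (fun t => f x y t) z (fz x y z).

Definition C1_2 (f : R -> R -> R) : Prop :=
  cont2 f /\ exists fx fy, is_dx2 f fx /\ is_dy2 f fy /\ cont2 fx /\ cont2 fy.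
Definition C2_2 (f : R -> R -> R) : Prop :=
  cont2 f /\ exists fx fy, is_dx2 f fx /\ is_dy2 f fy /\ C1_2 fx /\ C1_2 fy.

Definition C1_3 (f : R -> R -> R -> R) : Prop :=
  cont3 f /\ exists fx fy fz, is_dx3 f fx /\ is_dy3 f fy /\ is_dz3 f fz /\
    cont3 fx /\ cont3 fy /\ cont3 fz.
Definition C2_3 (f : R -> R -> R -> R) : Prop :=
  cont3 f /\ exists fx fy fz, is_dx3 f fx /\ is_dy3 f fy /\ is_dz3 f fz /\
    C1_3 fx /\ C1_3 fy /\ C1_3 fz.

Definition C1_near0 (d : R) (u du : R -> R) : Prop :=
  forall e, Rabs e <= d -> derivable_pt_lim u e (du e) /\ continuity_pt du e.

(* Main.v *)
Require Import Defs.
From Stdlib Require Import Reals.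
From Stdlib Require Import Lra Psatz ClassicalEpsilon FunctionalExtensionality.
Open Scope R_scope.


Lemma abs_le_inv x a : Rabs x <= a -> - a <= x <= a.
Proof. intros; split; [|apply Rle_trans with (Rabs x); [apply RRle_abs|auto]].
  apply Ropp_le_cancel; rewrite Ropp_involutive; apply Rle_trans with (Rabs x); auto.
  rewrite <- Rabs_Ropp; apply RRle_abs. Qed.
Lemma abs_bounds x : - Rabs x <= x <= Rabs x.
Proof. apply abs_le_inv; lra. Qed.
Ltac absl :=
 repeat match goal with
  | H : Rabs ?x < ?a |- _ => apply Rabs_def2 in H; destruct H
  | H : Rabs ?x <= ?a |- _ => apply abs_le_inv in H; destruct H
  end;
 try match goal with |- Rabs _ < _ => apply Rabs_def1 | |- Rabs _ <= _ => apply Rabs_le; split end; lra.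

Definition ct2 (f : R -> R -> R) x y := forall e, 0 < e -> exists d, 0 < d /\
  forall x' y', Rabs (x' - x) < d -> Rabs (y' - y) < d -> Rabs (f x' y' - f x y) < e.
Definition ct3 (f : R -> R -> R -> R) x y z := forall e, 0 < e -> exists d, 0 < d /\
  forall x' y' z', Rabs (x' - x) < d -> Rabs (y' - y) < d -> Rabs (z' - z) < d ->
    Rabs (f x' y' z' - f x y z) < e.
Definition lim0 (f : R -> R) l := forall e, 0 < e -> exists d, 0 < d /\
  forall h, h <> 0 -> Rabs h < d -> Rabs (f h - l) < e.

Lemma ct2_const c x y : ct2 (fun _ _ => c) x y.
Proof. intros e he; exists 1; split; [lra|]; intros; rewrite Rminus_diag, Rabs_R0; lra. Qed.
Lemma ct2_fst x y : ct2 (fun a _ => a) x y.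
Proof. intros e he; exists e; split; auto. Qed.
Lemma ct2_snd x y : ct2 (fun _ b => b) x y.
Proof. intros e he; exists e; split; auto. Qed.

Lemma ct2_comp2 (h f g : R -> R -> R) x y :
  ct2 h (f x y) (g x y) -> ct2 f x y -> ct2 g x y ->
  ct2 (fun a b => h (f a b) (g a b)) x y.
Proof.
  intros Hh Hf Hg e he. destruct (Hh e he) as [d1 [hd1 H1]].
  destruct (Hf d1 hd1) as [d2 [hd2 H2]]. destruct (Hg d1 hd1) as [d3 [hd3 H3]].
  exists (Rmin d2 d3); split. apply Rmin_pos; auto.
  intros x' y' h1 h2. apply H1; [apply H2|apply H3];
  try (eapply Rlt_le_trans; [eassumption| first [apply Rmin_l | apply Rmin_r]]).
Qed.

Lemma ct2_comp3 (h : R -> R -> R -> R) (f g k : R -> R -> R) x y :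
  ct3 h (f x y) (g x y) (k x y) -> ct2 f x y -> ct2 g x y -> ct2 k x y ->
  ct2 (fun a b => h (f a b) (g a b) (k a b)) x y.
Proof.
  intros Hh Hf Hg Hk e he. destruct (Hh e he) as [d1 [hd1 H1]].
  destruct (Hf d1 hd1) as [d2 [hd2 H2]]. destruct (Hg d1 hd1) as [d3 [hd3 H3]].
  destruct (Hk d1 hd1) as [d4 [hd4 H4]].
  exists (Rmin d2 (Rmin d3 d4)); split. repeat apply Rmin_pos; auto.
  intros x' y' h1 h2.
  assert (Rmin d2 (Rmin d3 d4) <= d2) by apply Rmin_l.
  assert (Rmin d2 (Rmin d3 d4) <= d3) by (eapply Rle_trans; [apply Rmin_r|apply Rmin_l]).
  assert (Rmin d2 (Rmin d3 d4) <= d4) by (eapply Rle_trans; [apply Rmin_r|apply Rmin_r]).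
  apply H1; [apply H2|apply H3|apply H4]; lra.
Qed.

Lemma ct2_plus_op a b : ct2 Rplus a b.
Proof.
  intros e he; exists (e/2); split; [lra|]; intros x' y' h1 h2.
  replace (x' + y' - (a + b)) with ((x' - a) + (y' - b)) by ring.
  eapply Rle_lt_trans; [apply Rabs_triang|lra].
Qed.

Lemma ct2_mult_op a b : ct2 Rmult a b.
Proof.
  intros e he.
  set (K := 1 + Rabs a + Rabs b).
  assert (hK : 0 < K) by (unfold K; pose proof (Rabs_pos a); pose proof (Rabs_pos b); lra).
  exists (Rmin 1 (e / K)); split. apply Rmin_pos; [lra| apply Rdiv_lt_0_compat; auto].
  intros x' y' h1 h2.
  pose proof (Rmin_l 1 (e/K)); pose proof (Rmin_r 1 (e/K)).
  set (d := Rmin 1 (e/K)) in *.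
  replace (x' * y' - a * b) with ((x' - a) * (y' - b) + (x' - a) * b + a * (y' - b)) by ring.
  assert (Rabs ((x' - a) * (y' - b)) <= Rabs (x'-a)).
  { rewrite Rabs_mult. pose proof (Rabs_pos (x'-a)). nra. }
  assert (Rabs ((x' - a) * b) <= d * Rabs b).
  { rewrite Rabs_mult. pose proof (Rabs_pos b). nra. }
  assert (Rabs (a * (y' - b)) <= Rabs a * d).
  { rewrite Rabs_mult. pose proof (Rabs_pos a). nra. }
  assert (d * K <= e).
  { assert (e / K * K = e) by (field; lra). apply Rle_trans with (e/K*K); [|lra].
    apply Rmult_le_compat_r; lra. }
  pose proof (Rabs_triang ((x' - a) * (y' - b) + (x' - a) * b) (a * (y' - b))).
  pose proof (Rabs_triang ((x' - a) * (y' - b)) ((x' - a) * b)).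
  unfold K in *. lra.
Qed.

Lemma ct2_opp_op a b : ct2 (fun x _ => - x) a b.
Proof.
  intros e he; exists e; split; auto; intros.
  replace (- x' - - a) with (- (x' - a)) by ring. rewrite Rabs_Ropp; auto.
Qed.

Lemma ct2_of_cont (f : R -> R) a b : continuity_pt f a -> ct2 (fun x _ => f x) a b.
Proof.
  intros Hc e he. destruct (Hc e he) as [d [hd H]]. exists d; split; auto.
  intros x' y' h1 h2. destruct (Req_dec x' a) as [->|ne].
  rewrite Rminus_diag, Rabs_R0; auto.
  apply (H x'). split. split; auto. exact I. simpl. unfold R_dist. auto.
Qed.

Lemma ct2_inv_op a b : a <> 0 -> ct2 (fun x _ => / x) a b.
Proof.
  intro ha. apply (ct2_of_cont (fun x => / x)).
  apply (continuity_pt_inv (fun x => x)). apply derivable_continuous_pt, derivable_pt_id. auto.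
Qed.

Lemma ct2_plus f g x y : ct2 f x y -> ct2 g x y -> ct2 (fun a b => f a b + g a b) x y.
Proof. intros; apply (ct2_comp2 Rplus); auto; apply ct2_plus_op. Qed.
Lemma ct2_mult f g x y : ct2 f x y -> ct2 g x y -> ct2 (fun a b => f a b * g a b) x y.
Proof. intros; apply (ct2_comp2 Rmult); auto; apply ct2_mult_op. Qed.
Lemma ct2_opp f x y : ct2 f x y -> ct2 (fun a b => - f a b) x y.
Proof. intros; apply (ct2_comp2 (fun u _ => - u) f f); auto; apply ct2_opp_op. Qed.
Lemma ct2_minus f g x y : ct2 f x y -> ct2 g x y -> ct2 (fun a b => f a b - g a b) x y.
Proof. intros; apply (ct2_plus f (fun a b => - g a b)); auto; apply ct2_opp; auto. Qed.
Lemma ct2_inv f x y : ct2 f x y -> f x y <> 0 -> ct2 (fun a b => / f a b) x y.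
Proof. intros; apply (ct2_comp2 (fun u _ => / u) f f); auto; apply ct2_inv_op; auto. Qed.
Lemma ct2_div f g x y : ct2 f x y -> ct2 g x y -> g x y <> 0 -> ct2 (fun a b => f a b / g a b) x y.
Proof. intros; unfold Rdiv; apply (ct2_mult f (fun a b => / g a b)); auto; apply ct2_inv; auto. Qed.

Lemma ct2_cont2 h f g x y : cont2 h -> ct2 f x y -> ct2 g x y ->
  ct2 (fun a b => h (f a b) (g a b)) x y.
Proof. intros Hh; apply ct2_comp2; exact (Hh _ _). Qed.
Lemma ct2_cont3 h f g k x y : cont3 h -> ct2 f x y -> ct2 g x y -> ct2 k x y ->
  ct2 (fun a b => h (f a b) (g a b) (k a b)) x y.
Proof. intros Hh; apply ct2_comp3; exact (Hh _ _ _). Qed.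


Lemma lim0_comp2 h f g a b : ct2 h a b -> lim0 f a -> lim0 g b ->
  lim0 (fun t => h (f t) (g t)) (h a b).
Proof.
  intros Hh Hf Hg e he. destruct (Hh e he) as [d1 [hd1 H1]].
  destruct (Hf d1 hd1) as [d2 [hd2 H2]]. destruct (Hg d1 hd1) as [d3 [hd3 H3]].
  exists (Rmin d2 d3); split. apply Rmin_pos; auto.
  intros t ht1 ht2. pose proof (Rmin_l d2 d3); pose proof (Rmin_r d2 d3).
  apply H1; [apply H2|apply H3]; auto; lra.
Qed.

Lemma lim0_const c : lim0 (fun _ => c) c.
Proof. intros e he; exists 1; split; [lra|]; intros; rewrite Rminus_diag, Rabs_R0; lra. Qed.

Lemma lim0_ext f g l d0 : 0 < d0 -> (forall t, t <> 0 -> Rabs t < d0 -> f t = g t) ->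
  lim0 f l -> lim0 g l.
Proof.
  intros hd0 E Hf e he. destruct (Hf e he) as [d [hd H]].
  exists (Rmin d d0); split. apply Rmin_pos; auto.
  intros t h1 h2. pose proof (Rmin_l d d0); pose proof (Rmin_r d d0).
  rewrite <- E by (auto; lra). apply H; auto; lra.
Qed.

Lemma lim0_squeeze f g a d0 : 0 < d0 -> (forall t, t <> 0 -> Rabs t < d0 -> Rabs (f t - a) <= Rabs (g t - a)) ->
  lim0 g a -> lim0 f a.
Proof.
  intros hd0 E Hg e he. destruct (Hg e he) as [d [hd H]].
  exists (Rmin d d0); split. apply Rmin_pos; auto.
  intros t h1 h2. pose proof (Rmin_l d d0); pose proof (Rmin_r d d0).
  eapply Rle_lt_trans. apply E; auto; lra. apply H; auto; lra.
Qed.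

Lemma derivable_lim0 f x l : derivable_pt_lim f x l -> lim0 (fun h => (f (x + h) - f x) / h) l.
Proof.
  intros D e he. destruct (D e he) as [d H]. exists d; split. apply cond_pos.
  intros; apply H; auto.
Qed.

Lemma lim0_derivable f x l : lim0 (fun h => (f (x + h) - f x) / h) l -> derivable_pt_lim f x l.
Proof.
  intros D e he. destruct (D e he) as [d [hd H]]. exists (mkposreal d hd).
  intros; apply H; auto.
Qed.

Lemma lim0_cont f x : continuity_pt f x -> lim0 (fun h => f (x + h)) (f x).
Proof.
  intros Hc e he. destruct (ct2_of_cont f x 0 Hc e he) as [d [hd H]].
  exists d; split; auto. intros h h1 h2. apply (H (x+h) 0).
  replace (x + h - x) with h by ring; auto. rewrite Rminus_diag, Rabs_R0; auto.
Qed.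

Lemma lim0_der_cont f x l : derivable_pt_lim f x l -> lim0 (fun h => f (x + h)) (f x).
Proof.
  intro D. apply lim0_cont. apply derivable_continuous_pt. exists l; exact D.
Qed.

Lemma lim0_ct2_l Y u v : ct2 Y u v -> lim0 (fun h => Y (u + h) v) (Y u v).
Proof.
  intros Hc e he. destruct (Hc e he) as [d [hd H]].
  exists d; split; auto. intros h h1 h2. apply H.
  replace (u + h - u) with h by ring; auto. rewrite Rminus_diag, Rabs_R0; auto.
Qed.

Lemma mvt_sym f f' a b :
  (forall c, Rmin a b <= c <= Rmax a b -> derivable_pt_lim f c (f' c)) ->
  exists c, Rmin a b <= c <= Rmax a b /\ f b - f a = f' c * (b - a).
Proof.
  intros D. destruct (Rtotal_order a b) as [lt|[eq|gt]].
  - destruct (MVT_cor2 f f' a b lt) as [c [E hc]].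
    { intros c hc; apply D. rewrite Rmin_left, Rmax_right by lra; lra. }
    exists c; split; auto. rewrite Rmin_left, Rmax_right by lra; lra.
  - subst. exists b. rewrite Rmin_left, Rmax_left by lra. split; [lra|ring].
  - destruct (MVT_cor2 f f' b a gt) as [c [E hc]].
    { intros c hc; apply D. rewrite Rmin_right, Rmax_left by lra; lra. }
    exists c; split. rewrite Rmin_right, Rmax_left by lra; lra.
    replace (f b - f a) with (- (f a - f b)) by ring. rewrite E; ring.
Qed.

Lemma between_abs a b c : Rmin a b <= c <= Rmax a b -> Rabs (c - a) <= Rabs (b - a).
Proof.
  intros [h1 h2]. unfold Rmin, Rmax in *.
  destruct (Rle_dec a b); unfold Rabs; repeat destruct Rcase_abs; lra.
Qed.

Lemma lim0_mult f g a b : lim0 f a -> lim0 g b -> lim0 (fun t => f t * g t) (a * b).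
Proof. intros; apply (lim0_comp2 Rmult); auto; apply ct2_mult_op. Qed.
Lemma lim0_plus f g a b : lim0 f a -> lim0 g b -> lim0 (fun t => f t + g t) (a + b).
Proof. intros; apply (lim0_comp2 Rplus); auto; apply ct2_plus_op. Qed.

Lemma chain2 (g g1 g2 : R -> R -> R) al be al' be' t rho :
  0 < rho ->
  derivable_pt_lim al t al' -> derivable_pt_lim be t be' ->
  (forall a b, Rabs (a - al t) < rho -> Rabs (b - be t) < rho ->
     derivable_pt_lim (fun s => g s b) a (g1 a b)) ->
  (forall a b, Rabs (a - al t) < rho -> Rabs (b - be t) < rho ->
     derivable_pt_lim (fun s => g a s) b (g2 a b)) ->
  ct2 g1 (al t) (be t) -> ct2 g2 (al t) (be t) ->
  derivable_pt_lim (fun s => g (al s) (be s)) t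
    (g1 (al t) (be t) * al' + g2 (al t) (be t) * be').
Proof.
  intros hrho Da Db D1 D2 C1 C2.
  pose proof (lim0_der_cont _ _ _ Da) as La.
  pose proof (lim0_der_cont _ _ _ Db) as Lb.
  destruct (La rho hrho) as [da [hda Ha]]. destruct (Lb rho hrho) as [db [hdb Hb]].
  set (d0 := Rmin da db).
  assert (hd0 : 0 < d0) by (apply Rmin_pos; auto).
  assert (near : forall h, h <> 0 -> Rabs h < d0 ->
     Rabs (al (t + h) - al t) < rho /\ Rabs (be (t + h) - be t) < rho).
  { intros h h1 h2. pose proof (Rmin_l da db); pose proof (Rmin_r da db).
    split; [apply Ha|apply Hb]; auto; unfold d0 in *; lra. }
  set (xi := fun h => epsilon (inhabits 0) (fun c =>
      Rmin (al t) (al (t+h)) <= c <= Rmax (al t) (al (t+h)) /\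
      g (al (t+h)) (be (t+h)) - g (al t) (be (t+h)) = g1 c (be (t+h)) * (al (t+h) - al t))).
  set (eta := fun h => epsilon (inhabits 0) (fun c =>
      Rmin (be t) (be (t+h)) <= c <= Rmax (be t) (be (t+h)) /\
      g (al t) (be (t+h)) - g (al t) (be t) = g2 (al t) c * (be (t+h) - be t))).
  assert (Sxi : forall h, h <> 0 -> Rabs h < d0 ->
      Rmin (al t) (al (t+h)) <= xi h <= Rmax (al t) (al (t+h)) /\
      g (al (t+h)) (be (t+h)) - g (al t) (be (t+h)) = g1 (xi h) (be (t+h)) * (al (t+h) - al t)).
  { intros h h1 h2. destruct (near h h1 h2) as [n1 n2]. unfold xi.
    match goal with |- context[epsilon ?i ?P] => apply (epsilon_spec i P) end.
    apply (mvt_sym (fun s => g s (be (t+h))) (fun c => g1 c (be (t+h)))).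
    intros c hc. apply D1; auto. pose proof (between_abs _ _ _ hc). lra. }
  assert (Seta : forall h, h <> 0 -> Rabs h < d0 ->
      Rmin (be t) (be (t+h)) <= eta h <= Rmax (be t) (be (t+h)) /\
      g (al t) (be (t+h)) - g (al t) (be t) = g2 (al t) (eta h) * (be (t+h) - be t)).
  { intros h h1 h2. destruct (near h h1 h2) as [n1 n2]. unfold eta.
    match goal with |- context[epsilon ?i ?P] => apply (epsilon_spec i P) end.
    apply (mvt_sym (fun s => g (al t) s) (fun c => g2 (al t) c)).
    intros c hc. apply D2. rewrite Rminus_diag, Rabs_R0; auto.
    pose proof (between_abs _ _ _ hc). lra. }
  apply lim0_derivable.
  apply (lim0_ext (fun h => g1 (xi h) (be (t+h)) * ((al (t+h) - al t) / h) +
                            g2 (al t) (eta h) * ((be (t+h) - be t) / h)) _ _ d0 hd0).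
  { intros h h1 h2. destruct (Sxi h h1 h2) as [_ E1]. destruct (Seta h h1 h2) as [_ E2].
    replace (g (al (t + h)) (be (t + h)) - g (al t) (be t)) with
      ((g (al (t + h)) (be (t + h)) - g (al t) (be (t + h))) + (g (al t) (be (t+h)) - g (al t) (be t))) by ring.
    rewrite E1, E2. field; auto. }
  apply lim0_plus; apply lim0_mult.
  - apply (lim0_comp2 g1 xi (fun h => be (t + h))); auto.
    apply (lim0_squeeze xi (fun h => al (t + h)) _ d0 hd0); auto.
    intros h h1 h2. destruct (Sxi h h1 h2) as [B _].
    pose proof (between_abs _ _ _ B). auto.
  - apply derivable_lim0; auto.
  - apply (lim0_comp2 g2 (fun _ => al t) eta); auto. apply lim0_const.
    apply (lim0_squeeze eta (fun h => be (t + h)) _ d0 hd0); auto.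
    intros h h1 h2. destruct (Seta h h1 h2) as [B _].
    pose proof (between_abs _ _ _ B). auto.
  - apply derivable_lim0; auto.
Qed.


Definition clamp r t := Rmax (- r) (Rmin r t).

Lemma clamp_lip r t s : Rabs (clamp r t - clamp r s) <= Rabs (t - s).
Proof.
  unfold clamp, Rmax, Rmin. repeat destruct Rle_dec; unfold Rabs; repeat destruct Rcase_abs; lra.
Qed.

Lemma clamp_id r t : - r <= t <= r -> clamp r t = t.
Proof. intros; unfold clamp, Rmax, Rmin; repeat destruct Rle_dec; lra. Qed.

Lemma clamp_range r t : 0 <= r -> - r <= clamp r t <= r.
Proof. intros; unfold clamp, Rmax, Rmin; repeat destruct Rle_dec; lra. Qed.

Lemma clamp_cont r x : continuity_pt (clamp r) x.
Proof.
  intros e he. exists e; split; auto. intros y [_ hy]. simpl in *. unfold R_dist in *.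
  eapply Rle_lt_trans; [apply clamp_lip|auto].
Qed.

Lemma ift_pos (F Fy : R -> R -> R -> R) rho :
  0 < rho ->
  (forall u v y, Rabs u < rho -> Rabs v < rho -> Rabs y < rho ->
     derivable_pt_lim (fun t => F u v t) y (Fy u v y)) ->
  (forall u v y, Rabs u < rho -> Rabs v < rho -> Rabs y < rho -> ct3 F u v y) ->
  ct3 Fy 0 0 0 -> F 0 0 0 = 0 -> 0 < Fy 0 0 0 ->
  exists d r (Y : R -> R -> R), 0 < d /\ d <= r /\ r < rho /\ Y 0 0 = 0 /\
   (forall u v, Rabs u < d -> Rabs v < d ->
      Rabs (Y u v) < r /\ F u v (Y u v) = 0 /\ ct2 Y u v) /\
   (forall u v y, Rabs u < d -> Rabs v < d -> Rabs y <= r -> F u v y = 0 -> y = Y u v) /\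
   (forall u v y, Rabs u < d -> Rabs v < d -> Rabs y <= r -> 0 < Fy u v y).
Proof.
  intros hrho DF CF CFy F0 Fy0.
  set (c := Fy 0 0 0) in *.
  destruct (CFy (c/2) ltac:(lra)) as [d1 [hd1 H1]].
  set (r := Rmin d1 rho / 2).
  assert (hr : 0 < r) by (unfold r; pose proof (Rmin_pos d1 rho hd1 hrho); lra).
  assert (hr1 : r < d1) by (unfold r; pose proof (Rmin_l d1 rho); pose proof (Rmin_pos d1 rho hd1 hrho); lra).
  assert (hr2 : r < rho) by (unfold r; pose proof (Rmin_r d1 rho); pose proof (Rmin_pos d1 rho hd1 hrho); lra).
  assert (Fpos : forall u v y, Rabs u <= r -> Rabs v <= r -> Rabs y <= r -> 0 < Fy u v y).
  { intros u v y hu hv hy.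
    assert (Rabs (Fy u v y - c) < c/2) by (apply H1; rewrite Rminus_0_r; lra).
    apply Rabs_def2 in H. lra. }
  assert (mono : forall u v y1 y2, Rabs u <= r -> Rabs v <= r -> - r <= y1 -> y1 < y2 -> y2 <= r ->
             F u v y1 < F u v y2).
  { intros u v y1 y2 hu hv h1 h2 h3.
    destruct (MVT_cor2 (fun t => F u v t) (fun t => Fy u v t) y1 y2 h2) as [z [E hz]].
    { intros z hz. apply DF; try lra. absl. }
    assert (0 < Fy u v z) by (apply Fpos; auto; absl).
    assert (0 < Fy u v z * (y2 - y1)) by (apply Rmult_lt_0_compat; lra). lra. }
  assert (Fr : 0 < F 0 0 r).
  { assert (F 0 0 0 < F 0 0 r) by (apply mono; rewrite ?Rabs_R0; lra). lra. }
  assert (Fmr : F 0 0 (- r) < 0).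
  { assert (F 0 0 (-r) < F 0 0 0) by (apply mono; rewrite ?Rabs_R0; lra). lra. }
  destruct (CF 0 0 r ltac:(rewrite Rabs_R0; lra) ltac:(rewrite Rabs_R0; lra)
              ltac:(rewrite Rabs_right; lra) _ Fr) as [d2 [hd2 H2]].
  destruct (CF 0 0 (-r) ltac:(rewrite Rabs_R0; lra) ltac:(rewrite Rabs_R0; lra)
              ltac:(rewrite Rabs_Ropp, Rabs_right; lra) (- F 0 0 (-r)) ltac:(lra)) as [d3 [hd3 H3]].
  set (d := Rmin r (Rmin d2 d3)).
  assert (hd : 0 < d) by (unfold d; repeat apply Rmin_pos; auto).
  assert (hdr : d <= r) by apply Rmin_l.
  assert (hdd2 : d <= d2) by (eapply Rle_trans; [apply Rmin_r|apply Rmin_l]).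
  assert (hdd3 : d <= d3) by (eapply Rle_trans; [apply Rmin_r|apply Rmin_r]).
  assert (Fur : forall u v, Rabs u < d -> Rabs v < d -> 0 < F u v r).
  { intros u v hu hv. assert (Rabs (F u v r - F 0 0 r) < F 0 0 r) by
      (apply H2; rewrite ?Rminus_0_r, ?Rminus_diag, ?Rabs_R0; lra).
    absl. }
  assert (Fumr : forall u v, Rabs u < d -> Rabs v < d -> F u v (-r) < 0).
  { intros u v hu hv. assert (Rabs (F u v (-r) - F 0 0 (-r)) < - F 0 0 (-r)) by
      (apply H3; rewrite ?Rminus_0_r, ?Rminus_diag, ?Rabs_R0; lra).
    absl. }
  assert (ex : forall u v, Rabs u < d -> Rabs v < d -> exists y, Rabs y <= r /\ F u v y = 0).
  { intros u v hu hv.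
    destruct (IVT (fun t => F u v (clamp r t)) (-r) r) as [z [hz Ez]]; try lra.
    - intro t. apply (continuity_pt_comp (clamp r) (fun y => F u v y)).
      apply clamp_cont. apply derivable_continuous_pt. exists (Fy u v (clamp r t)).
      pose proof (clamp_range r t). apply DF; try lra.
      absl.
    - rewrite clamp_id by lra. apply Fumr; auto.
    - rewrite clamp_id by lra. apply Fur; auto.
    - rewrite clamp_id in Ez by lra. exists z; split; auto.
      absl. }
  set (Y := fun u v => epsilon (inhabits 0) (fun y => Rabs y <= r /\ F u v y = 0)).
  assert (SY : forall u v, Rabs u < d -> Rabs v < d -> Rabs (Y u v) <= r /\ F u v (Y u v) = 0).
  { intros u v hu hv. unfold Y.
    match goal with |- context[epsilon ?i ?P] => apply (epsilon_spec i P) end.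
    apply ex; auto. }
  assert (uniq : forall u v y1 y2, Rabs u < d -> Rabs v < d -> Rabs y1 <= r -> Rabs y2 <= r ->
             F u v y1 = 0 -> F u v y2 = 0 -> y1 = y2).
  { intros u v y1 y2 hu hv h1 h2 E1 E2.
    destruct (Rtotal_order y1 y2) as [lt|[eq|gt]]; auto.
    - assert (F u v y1 < F u v y2) by (apply mono; try lra; absl). lra.
    - assert (F u v y2 < F u v y1) by (apply mono; try lra; absl). lra. }
  assert (Ylt : forall u v, Rabs u < d -> Rabs v < d -> Rabs (Y u v) < r).
  { intros u v hu hv. destruct (SY u v hu hv) as [h1 h2].
    destruct (Req_dec (Y u v) r) as [E|ne]. { rewrite E in h2. pose proof (Fur u v hu hv). lra. }
    destruct (Req_dec (Y u v) (-r)) as [E|ne']. { rewrite E in h2. pose proof (Fumr u v hu hv). lra. }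
    absl. }
  exists d, r, Y. split; [auto|]. split; [auto|]. split; [auto|]. split.
  { symmetry. apply (uniq 0 0); rewrite ?Rabs_R0; try lra; try apply SY; rewrite ?Rabs_R0; lra. }
  split; [|split].
  - intros u0 v0 hu0 hv0. split; [apply Ylt; auto|]. split; [apply SY; auto|].
    intros e he.
    set (Y0 := Y u0 v0). pose proof (Ylt u0 v0 hu0 hv0) as hY0. pose proof (SY u0 v0 hu0 hv0) as [_ EY0].
    fold Y0 in hY0, EY0.
    set (e' := Rmin e (r - Rabs Y0) / 2).
    assert (he' : 0 < e') by (unfold e'; pose proof (Rmin_pos e (r - Rabs Y0) he ltac:(lra)); lra).
    assert (he'1 : e' < e) by (unfold e'; pose proof (Rmin_l e (r - Rabs Y0)); lra).
    assert (he'2 : e' < r - Rabs Y0) by (unfold e'; pose proof (Rmin_r e (r - Rabs Y0)); lra).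
    assert (bY : - Rabs Y0 <= Y0 <= Rabs Y0) by apply abs_bounds.
    assert (P : 0 < F u0 v0 (Y0 + e')).
    { assert (F u0 v0 Y0 < F u0 v0 (Y0 + e')) by (apply mono; lra). lra. }
    assert (Q : F u0 v0 (Y0 - e') < 0).
    { assert (F u0 v0 (Y0 - e') < F u0 v0 Y0) by (apply mono; lra). lra. }
    destruct (CF u0 v0 (Y0 + e') ltac:(lra) ltac:(lra)
       ltac:(absl) _ P) as [dp [hdp Hp]].
    destruct (CF u0 v0 (Y0 - e') ltac:(lra) ltac:(lra)
       ltac:(absl) (- F u0 v0 (Y0 - e')) ltac:(lra)) as [dq [hdq Hq]].
    set (dl := Rmin (Rmin dp dq) (Rmin (d - Rabs u0) (d - Rabs v0))).
    assert (hdl : 0 < dl) by (unfold dl; repeat apply Rmin_pos; lra).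
    pose proof (Rmin_l (Rmin dp dq) (Rmin (d - Rabs u0) (d - Rabs v0))) as m1.
    pose proof (Rmin_r (Rmin dp dq) (Rmin (d - Rabs u0) (d - Rabs v0))) as m2.
    pose proof (Rmin_l dp dq) as m3. pose proof (Rmin_r dp dq) as m4.
    pose proof (Rmin_l (d - Rabs u0) (d - Rabs v0)) as m5. pose proof (Rmin_r (d - Rabs u0) (d - Rabs v0)) as m6.
    fold dl in m1, m2.
    exists dl; split; auto. intros u v hu hv.
    assert (hu' : Rabs u < d).
    { pose proof (Rabs_triang (u - u0) u0) as T. replace (u - u0 + u0) with u in T by ring. lra. }
    assert (hv' : Rabs v < d).
    { pose proof (Rabs_triang (v - v0) v0) as T. replace (v - v0 + v0) with v in T by ring. lra. }
    assert (P' : 0 < F u v (Y0 + e')).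
    { assert (Rabs (F u v (Y0 + e') - F u0 v0 (Y0 + e')) < F u0 v0 (Y0 + e'))
        by (apply Hp; rewrite ?Rminus_diag, ?Rabs_R0; lra).
      absl. }
    assert (Q' : F u v (Y0 - e') < 0).
    { assert (Rabs (F u v (Y0 - e') - F u0 v0 (Y0 - e')) < - F u0 v0 (Y0 - e'))
        by (apply Hq; rewrite ?Rminus_diag, ?Rabs_R0; lra).
      absl. }
    pose proof (Ylt u v hu' hv') as hY. destruct (SY u v hu' hv') as [_ EY].
    assert (bY' : - Rabs (Y u v) <= Y u v <= Rabs (Y u v)) by apply abs_bounds.
    assert (Y u v < Y0 + e').
    { destruct (Rlt_or_le (Y u v) (Y0 + e')) as [l|l]; auto.
      destruct (Req_dec (Y u v) (Y0 + e')) as [E|ne]. rewrite <- E in P'. lra.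
      assert (F u v (Y0 + e') < F u v (Y u v)) by (apply mono; lra). lra. }
    assert (Y0 - e' < Y u v).
    { destruct (Rlt_or_le (Y0 - e') (Y u v)) as [l|l]; auto.
      destruct (Req_dec (Y u v) (Y0 - e')) as [E|ne]. rewrite <- E in Q'. lra.
      assert (F u v (Y u v) < F u v (Y0 - e')) by (apply mono; lra). lra. }
    unfold Y0 in *. absl.
  - intros u v y hu hv hy Ey. apply (uniq u v); auto; apply SY; auto.
  - intros u v y hu hv hy. apply Fpos; lra.
Qed.


Lemma ct3_opp F x y z : ct3 F x y z -> ct3 (fun a b c => - F a b c) x y z.
Proof.
  intros C e he. destruct (C e he) as [d [hd H]]. exists d; split; auto.
  intros. replace (- F x' y' z' - - F x y z) with (- (F x' y' z' - F x y z)) by ring.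
  rewrite Rabs_Ropp; auto.
Qed.

Lemma ift (F Fy : R -> R -> R -> R) rho :
  0 < rho ->
  (forall u v y, Rabs u < rho -> Rabs v < rho -> Rabs y < rho ->
     derivable_pt_lim (fun t => F u v t) y (Fy u v y)) ->
  (forall u v y, Rabs u < rho -> Rabs v < rho -> Rabs y < rho -> ct3 F u v y) ->
  ct3 Fy 0 0 0 -> F 0 0 0 = 0 -> Fy 0 0 0 <> 0 ->
  exists d r (Y : R -> R -> R), 0 < d /\ d <= r /\ r < rho /\ Y 0 0 = 0 /\
   (forall u v, Rabs u < d -> Rabs v < d ->
      Rabs (Y u v) < r /\ F u v (Y u v) = 0 /\ ct2 Y u v) /\
   (forall u v y, Rabs u < d -> Rabs v < d -> Rabs y <= r -> F u v y = 0 -> y = Y u v) /\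
   (forall u v y, Rabs u < d -> Rabs v < d -> Rabs y <= r -> Fy u v y <> 0).
Proof.
  intros hrho DF CF CFy F0 Fy0.
  destruct (Rlt_or_le 0 (Fy 0 0 0)) as [pos|neg].
  - destruct (ift_pos F Fy rho) as (d & r & Y & h1 & h2 & h3 & h4 & h5 & h6 & h7); auto.
    exists d, r, Y. repeat split; auto; intros; try apply h5; auto.
    specialize (h7 u v y H H0 H1). lra.
  - destruct (ift_pos (fun u v y => - F u v y) (fun u v y => - Fy u v y) rho)
      as (d & r & Y & h1 & h2 & h3 & h4 & h5 & h6 & h7); auto.
    + intros. apply (derivable_pt_lim_opp (fun t => F u v t)); auto.
    + intros. apply ct3_opp; auto.
    + apply ct3_opp; auto.
    + lra.
    + assert (Fy 0 0 0 < 0) by lra. lra.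
    + exists d, r, Y. repeat split; auto; intros.
      * apply h5; auto.
      * destruct (h5 u v H H0) as [_ [E _]]. lra.
      * apply h5; auto.
      * apply h6; auto. lra.
      * specialize (h7 u v y H H0 H1). lra.
Qed.

Lemma lim0_comp3 h f g k a b c : ct3 h a b c -> lim0 f a -> lim0 g b -> lim0 k c ->
  lim0 (fun t => h (f t) (g t) (k t)) (h a b c).
Proof.
  intros Hh Hf Hg Hk e he. destruct (Hh e he) as [d1 [hd1 H1]].
  destruct (Hf d1 hd1) as [d2 [hd2 H2]]. destruct (Hg d1 hd1) as [d3 [hd3 H3]].
  destruct (Hk d1 hd1) as [d4 [hd4 H4]].
  exists (Rmin d2 (Rmin d3 d4)); split. repeat apply Rmin_pos; auto.
  intros t ht1 ht2.
  assert (Rmin d2 (Rmin d3 d4) <= d2) by apply Rmin_l.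
  assert (Rmin d2 (Rmin d3 d4) <= d3) by (eapply Rle_trans; [apply Rmin_r|apply Rmin_l]).
  assert (Rmin d2 (Rmin d3 d4) <= d4) by (eapply Rle_trans; [apply Rmin_r|apply Rmin_r]).
  apply H1; [apply H2|apply H3|apply H4]; auto; lra.
Qed.

Lemma lim0_shift u : lim0 (fun h => u + h) u.
Proof. intros e he; exists e; split; auto; intros. replace (u + h - u) with h by ring; auto. Qed.

Lemma ift_der (F Fy Fu : R -> R -> R -> R) (Y : R -> R -> R) d r rho u v :
  0 < d -> d <= r -> r < rho ->
  (forall u v, Rabs u < d -> Rabs v < d ->
      Rabs (Y u v) < r /\ F u v (Y u v) = 0 /\ ct2 Y u v) ->
  (forall u v y, Rabs u < d -> Rabs v < d -> Rabs y <= r -> Fy u v y <> 0) ->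
  (forall u v y, Rabs u < rho -> Rabs v < rho -> Rabs y < rho ->
     derivable_pt_lim (fun t => F u v t) y (Fy u v y)) ->
  (forall u v y, Rabs u < rho -> Rabs v < rho -> Rabs y < rho ->
     derivable_pt_lim (fun t => F t v y) u (Fu u v y)) ->
  Rabs u < d -> Rabs v < d ->
  ct3 Fu u v (Y u v) -> ct3 Fy u v (Y u v) ->
  derivable_pt_lim (fun t => Y t v) u (- Fu u v (Y u v) / Fy u v (Y u v)).
Proof.
  intros hd hdr hr HY HFy DFy DFu hu hv CFu CFy.
  set (d0 := d - Rabs u). assert (hd0 : 0 < d0) by (unfold d0; lra).
  set (Y0 := Y u v). destruct (HY u v hu hv) as [hY0 [EY0 CY]]. fold Y0 in hY0, EY0.
  assert (near : forall h, Rabs h < d0 -> Rabs (u + h) < d).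
  { intros h hh. pose proof (Rabs_triang u h). unfold d0 in hh. lra. }
  set (xi := fun h => epsilon (inhabits 0) (fun c =>
      Rmin u (u+h) <= c <= Rmax u (u+h) /\
      F (u+h) v (Y (u+h) v) - F u v (Y (u+h) v) = Fu c v (Y (u+h) v) * (u + h - u))).
  set (eta := fun h => epsilon (inhabits 0) (fun c =>
      Rmin Y0 (Y (u+h) v) <= c <= Rmax Y0 (Y (u+h) v) /\
      F u v (Y (u+h) v) - F u v Y0 = Fy u v c * (Y (u+h) v - Y0))).
  assert (Sxi : forall h, Rabs h < d0 ->
      Rmin u (u+h) <= xi h <= Rmax u (u+h) /\
      F (u+h) v (Y (u+h) v) - F u v (Y (u+h) v) = Fu (xi h) v (Y (u+h) v) * (u + h - u)).
  { intros h hh. pose proof (near h hh). destruct (HY (u+h) v H hv) as [h1 _]. unfold xi.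
    match goal with |- context[epsilon ?i ?P] => apply (epsilon_spec i P) end.
    apply (mvt_sym (fun s => F s v (Y (u+h) v)) (fun c => Fu c v (Y (u+h) v))).
    intros c hc. apply DFu; try absl.
    unfold Rmin, Rmax in hc; destruct Rle_dec; absl. }
  assert (Seta : forall h, Rabs h < d0 ->
      Rmin Y0 (Y (u+h) v) <= eta h <= Rmax Y0 (Y (u+h) v) /\
      F u v (Y (u+h) v) - F u v Y0 = Fy u v (eta h) * (Y (u+h) v - Y0)).
  { intros h hh. pose proof (near h hh). destruct (HY (u+h) v H hv) as [h1 _]. unfold eta.
    match goal with |- context[epsilon ?i ?P] => apply (epsilon_spec i P) end.
    apply (mvt_sym (fun s => F u v s) (fun c => Fy u v c)).
    intros c hc. apply DFy; try absl.
    unfold Rmin, Rmax in hc; destruct Rle_dec; absl. }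
  assert (Feta : forall h, Rabs h < d0 -> Fy u v (eta h) <> 0).
  { intros h hh. pose proof (near h hh). destruct (HY (u+h) v H hv) as [h1 _].
    destruct (Seta h hh) as [B _]. apply HFy; auto.
    unfold Rmin, Rmax in B; destruct Rle_dec; absl. }
  apply lim0_derivable.
  apply (lim0_ext (fun h => (fun a b => - a / b) (Fu (xi h) v (Y (u+h) v)) (Fy u v (eta h))) _ _ d0 hd0).
  { intros h h1 h2. destruct (Sxi h h2) as [_ E1]. destruct (Seta h h2) as [_ E2].
    pose proof (near h h2). destruct (HY (u+h) v H hv) as [_ [E3 _]].
    pose proof (Feta h h2). fold Y0.
    cbv beta. field_simplify_eq; auto.
    replace (u + h - u) with h in E1 by ring. fold Y0 in E2.
    lra. }
  apply (lim0_comp2 (fun a b => - a / b)).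
  - apply ct2_div. apply ct2_opp, ct2_fst. apply ct2_snd. apply HFy; auto. lra.
  - apply (lim0_comp3 Fu xi (fun _ => v) (fun h => Y (u+h) v)); auto.
    + apply (lim0_squeeze xi (fun h => u + h) _ d0 hd0); [|apply lim0_shift].
      intros h h1 h2. destruct (Sxi h h2) as [B _]. pose proof (between_abs _ _ _ B). auto.
    + apply lim0_const.
    + apply lim0_ct2_l; auto.
  - apply (lim0_comp3 Fy (fun _ => u) (fun _ => v) eta); auto.
    + apply lim0_const.
    + apply lim0_const.
    + apply (lim0_squeeze eta (fun h => Y (u + h) v) _ d0 hd0); [|apply lim0_ct2_l; auto].
      intros h h1 h2. destruct (Seta h h2) as [B _]. pose proof (between_abs _ _ _ B). auto.
Qed.


Lemma dplus f g x a b : derivable_pt_lim f x a -> derivable_pt_lim g x b ->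
  derivable_pt_lim (fun t => f t + g t) x (a + b).
Proof. intros; apply (derivable_pt_lim_plus f g); auto. Qed.
Lemma dminus f g x a b : derivable_pt_lim f x a -> derivable_pt_lim g x b ->
  derivable_pt_lim (fun t => f t - g t) x (a - b).
Proof. intros; apply (derivable_pt_lim_minus f g); auto. Qed.
Lemma dmult f g x a b : derivable_pt_lim f x a -> derivable_pt_lim g x b ->
  derivable_pt_lim (fun t => f t * g t) x (a * g x + f x * b).
Proof. intros; apply (derivable_pt_lim_mult f g); auto. Qed.
Lemma ddiv f g x a b : derivable_pt_lim f x a -> derivable_pt_lim g x b -> g x <> 0 ->
  derivable_pt_lim (fun t => f t / g t) x ((a * g x - b * f x) / (g x)²).
Proof. intros; apply (derivable_pt_lim_div f g); auto. Qed.
Lemma dval f x l l' : derivable_pt_lim f x l -> l = l' -> derivable_pt_lim f x l'.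
Proof. intros; subst; auto. Qed.

Lemma chain_x (g g1 g2 : R -> R -> R) (be : R -> R) be' x :
  (forall a b, derivable_pt_lim (fun s => g s b) a (g1 a b)) ->
  (forall a b, derivable_pt_lim (fun s => g a s) b (g2 a b)) ->
  ct2 g1 x (be x) -> ct2 g2 x (be x) -> derivable_pt_lim be x be' ->
  derivable_pt_lim (fun t => g t (be t)) x (g1 x (be x) * 1 + g2 x (be x) * be').
Proof.
  intros. apply (chain2 g g1 g2 (fun t => t) be 1 be' x 1); auto; try lra.
  apply derivable_pt_lim_id.
Qed.
Lemma chain_y (g g1 g2 : R -> R -> R) (al : R -> R) al' x :
  (forall a b, derivable_pt_lim (fun s => g s b) a (g1 a b)) ->
  (forall a b, derivable_pt_lim (fun s => g a s) b (g2 a b)) ->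
  ct2 g1 (al x) x -> ct2 g2 (al x) x -> derivable_pt_lim al x al' ->
  derivable_pt_lim (fun t => g (al t) t) x (g1 (al x) x * al' + g2 (al x) x * 1).
Proof.
  intros. apply (chain2 g g1 g2 al (fun t => t) al' 1 x 1); auto; try lra.
  apply derivable_pt_lim_id.
Qed.
Lemma chain_c (g g1 g2 : R -> R -> R) (be : R -> R) c be' x :
  (forall a b, derivable_pt_lim (fun s => g s b) a (g1 a b)) ->
  (forall a b, derivable_pt_lim (fun s => g a s) b (g2 a b)) ->
  ct2 g1 c (be x) -> ct2 g2 c (be x) -> derivable_pt_lim be x be' ->
  derivable_pt_lim (fun t => g c (be t)) x (g1 c (be x) * 0 + g2 c (be x) * be').
Proof.
  intros. apply (chain2 g g1 g2 (fun _ => c) be 0 be' x 1); auto; try lra.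
  apply derivable_pt_lim_const.
Qed.

Lemma uniq_dx3 H f1 f2 : is_dx3 H f1 -> is_dx3 H f2 -> f1 = f2.
Proof. intros A B. do 3 (apply functional_extensionality; intro). eapply uniqueness_limite; eauto. Qed.
Lemma uniq_dy3 H f1 f2 : is_dy3 H f1 -> is_dy3 H f2 -> f1 = f2.
Proof. intros A B. do 3 (apply functional_extensionality; intro). eapply uniqueness_limite; eauto. Qed.
Lemma uniq_dz3 H f1 f2 : is_dz3 H f1 -> is_dz3 H f2 -> f1 = f2.
Proof. intros A B. do 3 (apply functional_extensionality; intro). eapply uniqueness_limite; eauto. Qed.
Lemma uniq_dx2 H f1 f2 : is_dx2 H f1 -> is_dx2 H f2 -> f1 = f2.
Proof. intros A B. do 2 (apply functional_extensionality; intro). eapply uniqueness_limite; eauto. Qed.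
Lemma uniq_dy2 H f1 f2 : is_dy2 H f1 -> is_dy2 H f2 -> f1 = f2.
Proof. intros A B. do 2 (apply functional_extensionality; intro). eapply uniqueness_limite; eauto. Qed.

Lemma ct2_swap Y u v : ct2 Y v u -> ct2 (fun a b => Y b a) u v.
Proof.
  intros C e he. destruct (C e he) as [d [hd Hd]]. exists d; split; auto.
Qed.

Lemma ct3_of_ct2 (G : R -> R -> R) u v y : ct2 G y u -> ct3 (fun a b c => G c a) u v y.
Proof.
  intros C e he. destruct (C e he) as [d [hd Hd]]. exists d; split; auto.
Qed.

Lemma ct3_132 H u v y : cont3 H -> ct3 (fun a b c => H a c b) u v y.
Proof.
  intros C e he. destruct (C u y v e he) as [d [hd Hd]]. exists d; split; auto.
Qed.
Lemma ct3_231 H u v y : cont3 H -> ct3 (fun a b c => H b c a) u v y.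
Proof.
  intros C e he. destruct (C v y u e he) as [d [hd Hd]]. exists d; split; auto.
Qed.
Lemma ct2_fix3 H z x y : cont3 H -> ct2 (fun a b => H a b z) x y.
Proof.
  intros C e he. destruct (C x y z e he) as [d [hd Hd]]. exists d; split; auto.
  intros. apply Hd; auto. rewrite Rminus_diag, Rabs_R0; auto.
Qed.
Lemma ct2_fix1 H c x y : cont3 H -> ct2 (fun a b => H c a b) x y.
Proof.
  intros C e he. destruct (C c x y e he) as [d [hd Hd]]. exists d; split; auto.
  intros. apply Hd; auto. rewrite Rminus_diag, Rabs_R0; auto.
Qed.

Lemma ct2_cont_comp K A e : ct2 K (A e) e -> continuity_pt A e ->
  continuity_pt (fun t => K (A t) t) e.
Proof.
  intros CK CA eps he. destruct (CK eps he) as [d [hd Hd]].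
  destruct (CA d hd) as [d' [hd' Hd']]. exists (Rmin d d'); split. apply Rmin_pos; auto.
  intros t [[_ ht1] ht2]. simpl in *. unfold R_dist in *.
  pose proof (Rmin_l d d'); pose proof (Rmin_r d d').
  apply Hd. apply Hd'. split. split; auto. exact I. simpl; unfold R_dist; lra. lra.
Qed.

Lemma der_cont f x l : derivable_pt_lim f x l -> continuity_pt f x.
Proof. intros. apply derivable_continuous_pt. exists l; auto. Qed.

Lemma cont_small f x : continuity_pt f x -> forall e, 0 < e ->
  exists d, 0 < d /\ forall t, Rabs (t - x) < d -> Rabs (f t - f x) < e.
Proof.
  intros C e he. destruct (ct2_of_cont f x 0 C e he) as [d [hd Hd]].
  exists d; split; auto. intros t ht. apply (Hd t 0); auto. rewrite Rminus_diag, Rabs_R0; auto.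
Qed.


Lemma ift1 (G Gx Ge : R -> R -> R) rho :
  0 < rho ->
  (forall x e, Rabs x < rho -> Rabs e < rho -> derivable_pt_lim (fun t => G t e) x (Gx x e)) ->
  (forall x e, Rabs x < rho -> Rabs e < rho -> derivable_pt_lim (fun t => G x t) e (Ge x e)) ->
  (forall x e, Rabs x < rho -> Rabs e < rho -> ct2 G x e /\ ct2 Gx x e /\ ct2 Ge x e) ->
  G 0 0 = 0 -> Gx 0 0 <> 0 ->
  exists d r (A : R -> R), 0 < d /\ d <= r /\ r < rho /\ A 0 = 0 /\
   (forall e, Rabs e < d -> Rabs (A e) < r /\ G (A e) e = 0 /\ Gx (A e) e <> 0 /\
      derivable_pt_lim A e (- Ge (A e) e / Gx (A e) e) /\
      continuity_pt (fun t => - Ge (A t) t / Gx (A t) t) e) /\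
   (forall e x, Rabs e < d -> Rabs x <= r -> G x e = 0 -> x = A e).
Proof.
  intros hrho DGx DGe CG G0 Gx0.
  assert (a1 : forall u v y, Rabs u < rho -> Rabs v < rho -> Rabs y < rho ->
     derivable_pt_lim (fun t => G t u) y (Gx y u)) by (intros; apply DGx; auto).
  assert (a2 : forall u v y, Rabs u < rho -> Rabs v < rho -> Rabs y < rho ->
     ct3 (fun u v y => G y u) u v y) by (intros; apply ct3_of_ct2; apply CG; auto).
  assert (a3 : ct3 (fun u v y => Gx y u) 0 0 0) by
    (apply ct3_of_ct2; apply CG; rewrite Rabs_R0; auto).
  destruct (ift (fun u v y => G y u) (fun u v y => Gx y u) rho hrho a1 a2 a3 G0 Gx0) as
    (d & r & Y & hd & hdr & hr & Y0 & HY & UY & NY).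
  { assert (DA : forall e, Rabs e < d -> derivable_pt_lim (fun t => Y t 0) e
                 (- Ge (Y e 0) e / Gx (Y e 0) e)).
    { intros e he. assert (Rabs 0 < d) by (rewrite Rabs_R0; auto).
      destruct (HY e 0 he H) as [h1 [h2 h3]].
      refine (ift_der (fun u v y => G y u) (fun u v y => Gx y u) (fun u v y => Ge y u) Y d r rho e 0
        hd hdr hr HY NY _ _ he H _ _).
      - intros. apply DGx; auto.
      - intros. apply DGe; auto.
      - apply ct3_of_ct2. apply CG; lra.
      - apply ct3_of_ct2. apply CG; lra. }
    exists d, r, (fun e => Y e 0). split; [auto|]. split; [auto|]. split; [auto|]. split; [auto|].
    split.
    + intros e he. assert (h0 : Rabs 0 < d) by (rewrite Rabs_R0; auto).
      destruct (HY e 0 he h0) as [h1 [h2 h3]].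
      split; auto. split; auto. split. apply (NY e 0); auto; lra. split. apply DA; auto.
      apply (ct2_cont_comp (fun x e => - Ge x e / Gx x e) (fun t => Y t 0) e).
      * apply ct2_div. apply ct2_opp. apply CG; lra. apply CG; lra. apply (NY e 0); auto; lra.
      * eapply der_cont; apply DA; auto.
    + intros e x he hx Ex. apply UY; auto. rewrite Rabs_R0; auto. }
Qed.

Lemma step_phi (H Hx Hy He : R -> R -> R -> R) :
  cont3 H -> cont3 Hx -> cont3 Hy -> cont3 He ->
  is_dx3 H Hx -> is_dy3 H Hy -> is_dz3 H He -> H 0 0 0 = 0 -> Hy 0 0 0 <> 0 ->
  exists d1 r1 (phi : R -> R -> R), 0 < d1 /\ d1 <= r1 /\ r1 < 1 /\ phi 0 0 = 0 /\
  (forall x e, Rabs x < d1 -> Rabs e < d1 -> Rabs (phi x e) < r1 /\ H x (phi x e) e = 0 /\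
     ct2 phi x e /\ Hy x (phi x e) e <> 0 /\
     derivable_pt_lim (fun t => phi t e) x (- Hx x (phi x e) e / Hy x (phi x e) e) /\
     derivable_pt_lim (fun t => phi x t) e (- He x (phi x e) e / Hy x (phi x e) e)) /\
  (forall x e y, Rabs x < d1 -> Rabs e < d1 -> Rabs y <= r1 -> H x y e = 0 -> y = phi x e).
Proof.
  intros cH cHx cHy cHe dHx dHy dHe H0 Hy0.
  assert (a1 : forall u v y, Rabs u < 1 -> Rabs v < 1 -> Rabs y < 1 ->
     derivable_pt_lim (fun t => H u t v) y (Hy u y v)) by (intros; apply dHy).
  assert (a2 : forall u v y, Rabs u < 1 -> Rabs v < 1 -> Rabs y < 1 ->
     ct3 (fun u v y => H u y v) u v y) by (intros; apply ct3_132; auto).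
  assert (a3 : ct3 (fun u v y => Hy u y v) 0 0 0) by (apply ct3_132; auto).
  destruct (ift (fun u v y => H u y v) (fun u v y => Hy u y v) 1 ltac:(lra) a1 a2 a3 H0 Hy0) as
    (d & r & Y & hd & hdr & hr & Y0 & HY & UY & NY).
  { exists d, r, Y. split; [auto|]. split; [auto|]. split; [auto|]. split; [auto|].
    split; auto.
    intros x e hx he. destruct (HY x e hx he) as [h1 [h2 h3]].
    split; auto. split; auto. split; auto. split. apply NY; auto; lra. split.
    + refine (ift_der (fun u v y => H u y v) (fun u v y => Hy u y v) (fun u v y => Hx u y v)
               Y d r 1 x e hd hdr hr HY NY a1 _ hx he _ _).
      * intros; apply dHx.
      * apply ct3_132; auto.
      * apply ct3_132; auto.
    + refine (ift_der (fun u v y => H v y u) (fun u v y => Hy v y u) (fun u v y => He v y u)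
               (fun a b => Y b a) d r 1 e x hd hdr hr _ _ _ _ he hx _ _).
      * intros u v hu hv. destruct (HY v u hv hu) as [k1 [k2 k3]]. split; auto. split; auto.
        apply ct2_swap; auto.
      * intros; apply NY; auto.
      * intros; apply dHy.
      * intros; apply dHe.
      * apply ct3_231; auto.
      * apply ct3_231; auto. }
Qed.


Lemma ct2_of_cont2 f x y : cont2 f -> ct2 f x y.
Proof. intros C; exact (C x y). Qed.
Ltac leaf := try (intros; match goal with H : _ |- _ => apply H end); try (apply ct2_of_cont2; assumption);
  try apply ct2_fix3; try apply ct2_fix1; auto.
Lemma aux_db x y z : 0 * x + - y / z = y / z * -1.
Proof. unfold Rdiv; ring. Qed.
Ltac ctac := repeat (first [ apply ct2_minus | apply ct2_plus | apply ct2_mult | apply ct2_opp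
  | apply ct2_const | apply ct2_fst | apply ct2_snd
  | (apply ct2_cont3; [assumption| | | ]) | (apply ct2_cont2; [assumption| | ]) ]).

Theorem proposition1
  (fp gp fm gm : R -> R -> R) (H : R -> R -> R -> R)
  (fmx fmy gmx gmy : R -> R -> R) (Hx Hy He : R -> R -> R -> R)
  (Cfp : C2_2 fp) (Cgp : C2_2 gp) (Cfm : C2_2 fm) (Cgm : C2_2 gm) (CH : C2_3 H)
  (dfmx : is_dx2 fm fmx) (dfmy : is_dy2 fm fmy)
  (dgmx : is_dx2 gm gmx) (dgmy : is_dy2 gm gmy)
  (dHx : is_dx3 H Hx) (dHy : is_dy3 H Hy) (dHe : is_dz3 H He)
  (hfm0 : fm 0 0 = 0) (hgm0 : gm 0 0 = 0)
  (hH0 : H 0 0 0 = 0) (hHx0 : Hx 0 0 0 = 0) (hHy0 : Hy 0 0 0 <> 0)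
  (hcross : Hy 0 0 0 * gp 0 0 < 0)
  (hgmx0 : gmx 0 0 <> 0)
  (hnonpar : fmx 0 0 * gp 0 0 - gmx 0 0 * fp 0 0 <> 0) :
  exists r eps0 : R, 0 < r /\ 0 < eps0 /\
  exists (A B dA dB : R -> R),
    (forall eps, 0 < eps <= eps0 ->
       Rabs (A eps) <= r /\ Rabs (B eps) <= r /\
       H (A eps) (B eps) eps = 0 /\
       Hx (A eps) (B eps) eps * fm (A eps) (B eps)
         + Hy (A eps) (B eps) eps * gm (A eps) (B eps) = 0 /\
       (forall x y, Rabs x <= r -> Rabs y <= r ->
          H x y eps = 0 ->
          Hx x y eps * fm x y + Hy x y eps * gm x y = 0 ->
          x = A eps /\ y = B eps)) /\
    C1_near0 eps0 A dA /\ C1_near0 eps0 B dB /\ A 0 = 0 /\ B 0 = 0 /\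
    dA 0 = He 0 0 0 / Hy 0 0 0 * (gmy 0 0 / gmx 0 0) /\
    dB 0 = He 0 0 0 / Hy 0 0 0 * (-1) /\
    (forall eps, 0 < eps <= eps0 ->
       forall x y, Rabs x <= r -> Rabs y <= r -> H x y eps = 0 ->
         ((x, y) <> (A eps, B eps) <->
          (Hx x y eps * fm x y + Hy x y eps * gm x y > 0 \/
           Hx x y eps * fm x y + Hy x y eps * gm x y < 0))) /\
    (exists (delta rho : R) (a b lam da db dlam : R -> R),
       0 < delta /\ 0 < rho /\
       a 0 = 0 /\ b 0 = 0 /\ lam 0 = 0 /\
       C1_near0 delta a da /\ C1_near0 delta b db /\ C1_near0 delta lam dlam /\
       (forall eps, Rabs eps <= delta ->
          Rabs (a eps) < rho /\ Rabs (b eps) < rho /\ Rabs (lam eps) < rho /\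
          fm (a eps) (b eps) - lam eps * fp (a eps) (b eps) = 0 /\
          gm (a eps) (b eps) - lam eps * gp (a eps) (b eps) = 0 /\
          H (a eps) (b eps) eps = 0) /\
       (forall eps a' b' l', Rabs eps <= delta ->
          Rabs a' < rho -> Rabs b' < rho -> Rabs l' < rho ->
          fm a' b' - l' * fp a' b' = 0 ->
          gm a' b' - l' * gp a' b' = 0 ->
          H a' b' eps = 0 ->
          a' = a eps /\ b' = b eps /\ l' = lam eps) /\
       da 0 = He 0 0 0 / Hy 0 0 0 *
              ((fmy 0 0 * gp 0 0 - gmy 0 0 * fp 0 0) /
               (fmx 0 0 * gp 0 0 - gmx 0 0 * fp 0 0)) /\
       db 0 = He 0 0 0 / Hy 0 0 0 * (-1) /\
       dlam 0 = He 0 0 0 / Hy 0 0 0 *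
              (- ((fmx 0 0 * gmy 0 0 - fmy 0 0 * gmx 0 0) /
                  (fmx 0 0 * gp 0 0 - gmx 0 0 * fp 0 0)))).
Proof.
  destruct CH as [cH [hx [hy [hz [dhx [dhy [dhz [C1x [C1y C1z]]]]]]]]].
  pose proof (uniq_dx3 _ _ _ dhx dHx) as E; subst hx.
  pose proof (uniq_dy3 _ _ _ dhy dHy) as E; subst hy.
  pose proof (uniq_dz3 _ _ _ dhz dHe) as E; subst hz.
  clear dhx dhy dhz.
  destruct C1x as [cHx [Hxx [Hxy [Hxz [dHxx [dHxy [dHxz [cHxx [cHxy cHxz]]]]]]]]].
  destruct C1y as [cHy [Hyx [Hyy [Hyz [dHyx [dHyy [dHyz [cHyx [cHyy cHyz]]]]]]]]].
  destruct C1z as [cHe _].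
  destruct Cfm as [cfm [fx [fy [dfx [dfy [[cfmx _] [cfmy _]]]]]]].
  pose proof (uniq_dx2 _ _ _ dfx dfmx) as E; subst fx.
  pose proof (uniq_dy2 _ _ _ dfy dfmy) as E; subst fy. clear dfx dfy.
  destruct Cgm as [cgm [fx [fy [dfx [dfy [[cgmx _] [cgmy _]]]]]]].
  pose proof (uniq_dx2 _ _ _ dfx dgmx) as E; subst fx.
  pose proof (uniq_dy2 _ _ _ dfy dgmy) as E; subst fy. clear dfx dfy.
  destruct Cfp as [cfp [fpx [fpy [dfpx [dfpy [[cfpx _] [cfpy _]]]]]]].
  destruct Cgp as [cgp [gpx [gpy [dgpx [dgpy [[cgpx _] [cgpy _]]]]]]].
  destruct (step_phi H Hx Hy He cH cHx cHy cHe dHx dHy dHe hH0 hHy0)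
    as (d1 & r1 & phi & hd1 & hd1r & hr1 & phi0 & Hphi & Uphi).
  pose (phix := fun x e => - Hx x (phi x e) e / Hy x (phi x e) e).
  pose (phie := fun x e => - He x (phi x e) e / Hy x (phi x e) e).
  assert (Cphi : forall x e, Rabs x < d1 -> Rabs e < d1 -> ct2 phi x e).
  { intros x e hx he; apply Hphi; auto. }
  assert (Cphix : forall x e, Rabs x < d1 -> Rabs e < d1 -> ct2 phix x e).
  { intros x e hx he. unfold phix. apply ct2_div. ctac; apply Cphi; auto. ctac; apply Cphi; auto.
    apply Hphi; auto. }
  assert (Cphie : forall x e, Rabs x < d1 -> Rabs e < d1 -> ct2 phie x e).
  { intros x e hx he. unfold phie. apply ct2_div. ctac; apply Cphi; auto. ctac; apply Cphi; auto.
    apply Hphi; auto. }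
  assert (Dphix : forall x e, Rabs x < d1 -> Rabs e < d1 -> derivable_pt_lim (fun t => phi t e) x (phix x e)).
  { intros x e hx he; apply Hphi; auto. }
  assert (Dphie : forall x e, Rabs x < d1 -> Rabs e < d1 -> derivable_pt_lim (fun t => phi x t) e (phie x e)).
  { intros x e hx he; apply Hphi; auto. }
  assert (phix0 : phix 0 0 = 0).
  { unfold phix. rewrite phi0, hHx0. field; auto. }
  assert (phie0 : phie 0 0 = - He 0 0 0 / Hy 0 0 0).
  { unfold phie. rewrite phi0. auto. }
  clearbody phix phie.
  assert (hbox : forall x e, Rabs x < d1 -> Rabs e < d1 -> Rabs (phi x e) < r1) by (intros; apply Hphi; auto).
  pose (G := fun x e => Hx x (phi x e) e * fm x (phi x e) + Hy x (phi x e) e * gm x (phi x e)).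
  pose (Gx := fun x e =>
     (Hxx x (phi x e) e * 1 + Hxy x (phi x e) e * phix x e) * fm x (phi x e)
     + Hx x (phi x e) e * (fmx x (phi x e) * 1 + fmy x (phi x e) * phix x e)
     + ((Hyx x (phi x e) e * 1 + Hyy x (phi x e) e * phix x e) * gm x (phi x e)
     + Hy x (phi x e) e * (gmx x (phi x e) * 1 + gmy x (phi x e) * phix x e))).
  pose (Ge := fun x e =>
     (Hxy x (phi x e) e * phie x e + Hxz x (phi x e) e * 1) * fm x (phi x e)
     + Hx x (phi x e) e * (fmx x (phi x e) * 0 + fmy x (phi x e) * phie x e)
     + ((Hyy x (phi x e) e * phie x e + Hyz x (phi x e) e * 1) * gm x (phi x e)
     + Hy x (phi x e) e * (gmx x (phi x e) * 0 + gmy x (phi x e) * phie x e))).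
  assert (DGx : forall x e, Rabs x < d1 -> Rabs e < d1 -> derivable_pt_lim (fun t => G t e) x (Gx x e)).
  { intros x e hx he. unfold G, Gx. eapply dval; [apply dplus; apply dmult|cbv beta; reflexivity].
    - apply (chain_x (fun a b => Hx a b e) (fun a b => Hxx a b e) (fun a b => Hxy a b e) (fun t => phi t e));
leaf.
    - apply (chain_x fm fmx fmy (fun t => phi t e)); leaf.
    - apply (chain_x (fun a b => Hy a b e) (fun a b => Hyx a b e) (fun a b => Hyy a b e) (fun t => phi t e));
leaf.
    - apply (chain_x gm gmx gmy (fun t => phi t e)); leaf. }
  assert (DGe : forall x e, Rabs x < d1 -> Rabs e < d1 -> derivable_pt_lim (fun t => G x t) e (Ge x e)).
  { intros x e hx he. unfold G, Ge. eapply dval; [apply dplus; apply dmult|cbv beta; reflexivity].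
    - apply (chain_y (fun a b => Hx x a b) (fun a b => Hxy x a b) (fun a b => Hxz x a b) (fun t => phi x t));
leaf.
    - apply (chain_c fm fmx fmy (fun t => phi x t)); leaf.
    - apply (chain_y (fun a b => Hy x a b) (fun a b => Hyy x a b) (fun a b => Hyz x a b) (fun t => phi x t));
leaf.
    - apply (chain_c gm gmx gmy (fun t => phi x t)); leaf. }
  assert (CG : forall x e, Rabs x < d1 -> Rabs e < d1 -> ct2 G x e /\ ct2 Gx x e /\ ct2 Ge x e).
  { intros x e hx he. unfold G, Gx, Ge.
    split; [|split]; ctac; first [apply Cphi | apply Cphix | apply Cphie]; auto. }
  assert (G0 : G 0 0 = 0).
  { unfold G. rewrite phi0, hHx0, hfm0, hgm0. ring. }
  assert (Gx0 : Gx 0 0 = Hy 0 0 0 * gmx 0 0).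
  { unfold Gx. rewrite phi0, hHx0, hfm0, hgm0, phix0. ring. }
  assert (Ge0 : Ge 0 0 = - He 0 0 0 * gmy 0 0).
  { unfold Ge. rewrite phi0, hHx0, hfm0, hgm0, phie0. field; auto. }
  destruct (ift1 G Gx Ge d1 hd1 DGx DGe CG G0 ltac:(rewrite Gx0; apply Rmult_integral_contrapositive; auto))
    as (d2 & r2 & A & hd2 & hd2r & hr2 & A0 & HA & UA).
  assert (hAd1 : forall e, Rabs e < d2 -> Rabs (A e) < d1).
  { intros e he. destruct (HA e he) as [k _]. lra. }
  assert (hd21 : d2 < d1) by lra.
  pose (dA := fun t => - Ge (A t) t / Gx (A t) t).
  pose (B := fun t => phi (A t) t).
  pose (dB := fun t => phix (A t) t * dA t + phie (A t) t).
  assert (DB : forall e, Rabs e < d2 -> derivable_pt_lim B e (dB e)).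
  { intros e he. unfold B, dB.
    pose proof (hAd1 e he) as hAe.
    pose (rr := Rmin (d1 - Rabs (A e)) (d1 - Rabs e)).
    assert (hrr : 0 < rr) by (unfold rr; apply Rmin_pos; lra).
    assert (hrr1 : rr <= d1 - Rabs (A e)) by apply Rmin_l.
    assert (hrr2 : rr <= d1 - Rabs e) by apply Rmin_r.
    eapply dval; [apply (chain2 phi phix phie A (fun t => t) (dA e) 1 e rr hrr)|cbv beta; ring].
    - apply HA; auto.
    - apply derivable_pt_lim_id.
    - intros a b ha hb. apply Dphix.
      + pose proof (Rabs_triang (a - A e) (A e)). replace (a - A e + A e) with a in H0 by ring. lra.
      + pose proof (Rabs_triang (b - e) e). replace (b - e + e) with b in H0 by ring. lra.
    - intros a b ha hb. apply Dphie.
      + pose proof (Rabs_triang (a - A e) (A e)). replace (a - A e + A e) with a in H0 by ring. lra.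
      + pose proof (Rabs_triang (b - e) e). replace (b - e + e) with b in H0 by ring. lra.
    - apply Cphix; lra.
    - apply Cphie; lra. }
  assert (CdB : forall e, Rabs e < d2 -> continuity_pt dB e).
  { intros e he. unfold dB, dA.
    apply (ct2_cont_comp (fun x e => phix x e * (- Ge x e / Gx x e) + phie x e) A e).
    - pose proof (hAd1 e he). apply ct2_plus. apply ct2_mult. apply Cphix; lra.
      apply ct2_div. apply ct2_opp. apply CG; lra. apply CG; lra. apply HA; auto. apply Cphie; lra.
    - eapply der_cont. apply HA; auto. }
  assert (B0 : B 0 = 0) by (unfold B; rewrite A0; auto).
  assert (CB0 : continuity_pt B 0) by (eapply der_cont; apply DB; rewrite Rabs_R0; lra).
  destruct (cont_small B 0 CB0 r2 ltac:(lra)) as [dB0 [hdB0 HB0]].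
  rewrite B0 in HB0.
  pose (eps0 := Rmin d2 dB0 / 2).
  assert (heps0 : 0 < eps0) by (unfold eps0; pose proof (Rmin_pos _ _ hd2 hdB0); lra).
  assert (heps0a : eps0 < d2) by (unfold eps0; pose proof (Rmin_l d2 dB0); pose proof (Rmin_pos _ _ hd2 hdB0); lra).
  assert (heps0b : eps0 < dB0) by (unfold eps0; pose proof (Rmin_r d2 dB0); pose proof (Rmin_pos _ _ hd2 hdB0); lra).
  assert (P3 : exists (delta rho : R) (a b lam da db dlam : R -> R),
       0 < delta /\ 0 < rho /\
       a 0 = 0 /\ b 0 = 0 /\ lam 0 = 0 /\
       C1_near0 delta a da /\ C1_near0 delta b db /\ C1_near0 delta lam dlam /\
       (forall eps, Rabs eps <= delta ->
          Rabs (a eps) < rho /\ Rabs (b eps) < rho /\ Rabs (lam eps) < rho /\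
          fm (a eps) (b eps) - lam eps * fp (a eps) (b eps) = 0 /\
          gm (a eps) (b eps) - lam eps * gp (a eps) (b eps) = 0 /\
          H (a eps) (b eps) eps = 0) /\
       (forall eps a' b' l', Rabs eps <= delta ->
          Rabs a' < rho -> Rabs b' < rho -> Rabs l' < rho ->
          fm a' b' - l' * fp a' b' = 0 ->
          gm a' b' - l' * gp a' b' = 0 ->
          H a' b' eps = 0 ->
          a' = a eps /\ b' = b eps /\ l' = lam eps) /\
       da 0 = He 0 0 0 / Hy 0 0 0 *
              ((fmy 0 0 * gp 0 0 - gmy 0 0 * fp 0 0) /
               (fmx 0 0 * gp 0 0 - gmx 0 0 * fp 0 0)) /\
       db 0 = He 0 0 0 / Hy 0 0 0 * (-1) /\
       dlam 0 = He 0 0 0 / Hy 0 0 0 *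
              (- ((fmx 0 0 * gmy 0 0 - fmy 0 0 * gmx 0 0) /
                  (fmx 0 0 * gp 0 0 - gmx 0 0 * fp 0 0)))).
  { pose (F3 := fun x e => fm x (phi x e) * gp x (phi x e) - gm x (phi x e) * fp x (phi x e)).
    pose (F3x := fun x e =>
      ((fmx x (phi x e) * 1 + fmy x (phi x e) * phix x e) * gp x (phi x e)
       + fm x (phi x e) * (gpx x (phi x e) * 1 + gpy x (phi x e) * phix x e))
      - ((gmx x (phi x e) * 1 + gmy x (phi x e) * phix x e) * fp x (phi x e)
       + gm x (phi x e) * (fpx x (phi x e) * 1 + fpy x (phi x e) * phix x e))).
    pose (F3e := fun x e =>
      ((fmx x (phi x e) * 0 + fmy x (phi x e) * phie x e) * gp x (phi x e)
       + fm x (phi x e) * (gpx x (phi x e) * 0 + gpy x (phi x e) * phie x e))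
      - ((gmx x (phi x e) * 0 + gmy x (phi x e) * phie x e) * fp x (phi x e)
       + gm x (phi x e) * (fpx x (phi x e) * 0 + fpy x (phi x e) * phie x e))).
    assert (DF3x : forall x e, Rabs x < d1 -> Rabs e < d1 -> derivable_pt_lim (fun t => F3 t e) x (F3x x e)).
    { intros x e hx he. unfold F3, F3x. eapply dval; [apply dminus; apply dmult|cbv beta; reflexivity].
      - apply (chain_x fm fmx fmy (fun t => phi t e)); leaf.
      - apply (chain_x gp gpx gpy (fun t => phi t e)); leaf.
      - apply (chain_x gm gmx gmy (fun t => phi t e)); leaf.
      - apply (chain_x fp fpx fpy (fun t => phi t e)); leaf. }
    assert (DF3e : forall x e, Rabs x < d1 -> Rabs e < d1 -> derivable_pt_lim (fun t => F3 x t) e (F3e x e)).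
    { intros x e hx he. unfold F3, F3e. eapply dval; [apply dminus; apply dmult|cbv beta; reflexivity].
      - apply (chain_c fm fmx fmy (fun t => phi x t)); leaf.
      - apply (chain_c gp gpx gpy (fun t => phi x t)); leaf.
      - apply (chain_c gm gmx gmy (fun t => phi x t)); leaf.
      - apply (chain_c fp fpx fpy (fun t => phi x t)); leaf. }
    assert (CF3 : forall x e, Rabs x < d1 -> Rabs e < d1 -> ct2 F3 x e /\ ct2 F3x x e /\ ct2 F3e x e).
    { intros x e hx he. unfold F3, F3x, F3e.
      split; [|split]; ctac; first [apply Cphi | apply Cphix | apply Cphie]; auto. }
    assert (F30 : F3 0 0 = 0).
    { unfold F3. rewrite phi0, hfm0, hgm0. ring. }
    assert (F3x0 : F3x 0 0 = fmx 0 0 * gp 0 0 - gmx 0 0 * fp 0 0).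
    { unfold F3x. rewrite phi0, hfm0, hgm0, phix0. ring. }
    assert (F3e0 : F3e 0 0 = - He 0 0 0 / Hy 0 0 0 * (fmy 0 0 * gp 0 0 - gmy 0 0 * fp 0 0)).
    { unfold F3e. rewrite phi0, hfm0, hgm0, phie0. ring. }
    destruct (ift1 F3 F3x F3e d1 hd1 DF3x DF3e CF3 F30 ltac:(rewrite F3x0; auto))
      as (d3 & r3 & a & hd3 & hd3r & hr3 & a0 & Ha & Ua).
    assert (had1 : forall e, Rabs e < d3 -> Rabs (a e) < d1).
    { intros e he. destruct (Ha e he) as [k _]. lra. }
    assert (hd31 : d3 < d1) by lra.
    assert (gp0 : gp 0 0 <> 0).
    { intro z. rewrite z, Rmult_0_r in hcross. lra. }
    destruct (cgp 0 0 (Rabs (gp 0 0)) ltac:(apply Rabs_pos_lt; auto)) as [dg [hdg Hdg]].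
    assert (gpnz : forall x y, Rabs x < dg -> Rabs y < dg -> gp x y <> 0).
    { intros x y hx hy z. assert (Rabs (gp x y - gp 0 0) < Rabs (gp 0 0)) by
        (apply Hdg; rewrite Rminus_0_r; auto).
      rewrite z, Rminus_0_l, Rabs_Ropp in H0. lra. }
    pose (rho := Rmin r3 dg).
    assert (hrho : 0 < rho) by (unfold rho; apply Rmin_pos; lra).
    assert (hrho1 : rho <= r3) by apply Rmin_l.
    assert (hrho2 : rho <= dg) by apply Rmin_r.
    pose (da := fun t => - F3e (a t) t / F3x (a t) t).
    pose (b := fun t => phi (a t) t).
    pose (db := fun t => phix (a t) t * da t + phie (a t) t).
    pose (lam := fun t => gm (a t) (b t) / gp (a t) (b t)).
    pose (dlam := fun t => ((gmx (a t) (b t) * da t + gmy (a t) (b t) * db t) * gp (a t) (b t)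
          - (gpx (a t) (b t) * da t + gpy (a t) (b t) * db t) * gm (a t) (b t)) / (gp (a t) (b t))²).
    assert (Db : forall e, Rabs e < d3 -> derivable_pt_lim b e (db e)).
    { intros e he. unfold b, db.
      pose proof (had1 e he) as hAe.
      pose (rr := Rmin (d1 - Rabs (a e)) (d1 - Rabs e)).
      assert (hrr : 0 < rr) by (unfold rr; apply Rmin_pos; lra).
      assert (hrr1 : rr <= d1 - Rabs (a e)) by apply Rmin_l.
      assert (hrr2 : rr <= d1 - Rabs e) by apply Rmin_r.
      eapply dval; [apply (chain2 phi phix phie a (fun t => t) (da e) 1 e rr hrr)|cbv beta; ring].
      - apply Ha; auto.
      - apply derivable_pt_lim_id.
      - intros x y hx hy. apply Dphix.
        + pose proof (Rabs_triang (x - a e) (a e)). replace (x - a e + a e) with x in H0 by ring. lra.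
        + pose proof (Rabs_triang (y - e) e). replace (y - e + e) with y in H0 by ring. lra.
      - intros x y hx hy. apply Dphie.
        + pose proof (Rabs_triang (x - a e) (a e)). replace (x - a e + a e) with x in H0 by ring. lra.
        + pose proof (Rabs_triang (y - e) e). replace (y - e + e) with y in H0 by ring. lra.
      - apply Cphix; lra.
      - apply Cphie; lra. }
    assert (Cdb : forall e, Rabs e < d3 -> continuity_pt db e).
    { intros e he. unfold db, da.
      apply (ct2_cont_comp (fun x e => phix x e * (- F3e x e / F3x x e) + phie x e) a e).
      - pose proof (had1 e he). apply ct2_plus. apply ct2_mult. apply Cphix; lra.
        apply ct2_div. apply ct2_opp. apply CF3; lra. apply CF3; lra. apply Ha; auto. apply Cphie; lra.
      - eapply der_cont. apply Ha; auto. }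
    assert (b0 : b 0 = 0) by (unfold b; rewrite a0; auto).
    assert (Ca0 : continuity_pt a 0) by (eapply der_cont; apply Ha; rewrite Rabs_R0; lra).
    assert (Cb0 : continuity_pt b 0) by (eapply der_cont; apply Db; rewrite Rabs_R0; lra).
    destruct (cont_small a 0 Ca0 rho hrho) as [da0 [hda0 Hda0]]. rewrite a0 in Hda0.
    destruct (cont_small b 0 Cb0 rho hrho) as [db0 [hdb0 Hdb0]]. rewrite b0 in Hdb0.
    pose (D := Rmin d3 (Rmin da0 db0)).
    assert (hD : 0 < D) by (unfold D; repeat apply Rmin_pos; lra).
    assert (hD1 : D <= d3) by apply Rmin_l.
    assert (hD2 : D <= da0) by (eapply Rle_trans; [apply Rmin_r|apply Rmin_l]).
    assert (hD3 : D <= db0) by (eapply Rle_trans; [apply Rmin_r|apply Rmin_r]).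
    assert (smallab : forall e, Rabs e < D -> Rabs (a e) < rho /\ Rabs (b e) < rho).
    { intros e he. split.
      - replace (a e) with (a e - 0) by ring. apply Hda0. rewrite Rminus_0_r; lra.
      - replace (b e) with (b e - 0) by ring. apply Hdb0. rewrite Rminus_0_r; lra. }
    assert (gpab : forall e, Rabs e < D -> gp (a e) (b e) <> 0).
    { intros e he. destruct (smallab e he). apply gpnz; lra. }
    assert (Dlam : forall e, Rabs e < D -> derivable_pt_lim lam e (dlam e)).
    { intros e he. unfold lam, dlam.
      assert (hDa : derivable_pt_lim a e (da e)) by (apply Ha; lra).
      assert (hDb : derivable_pt_lim b e (db e)) by (apply Db; lra).
      eapply dval; [apply ddiv; [ | | apply gpab; auto] | reflexivity].
      - apply (chain2 gm gmx gmy a b (da e) (db e) e 1); try lra; auto;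
          try (intros; apply dgmx); try (intros; apply dgmy); apply ct2_of_cont2; auto.
      - apply (chain2 gp gpx gpy a b (da e) (db e) e 1); try lra; auto;
          try (intros; apply dgpx); try (intros; apply dgpy); apply ct2_of_cont2; auto. }
    assert (Cdlam : forall e, Rabs e < D -> continuity_pt dlam e).
    { intros e he. unfold dlam, db, da, b.
      apply (ct2_cont_comp (fun x e =>
          ((gmx x (phi x e) * (- F3e x e / F3x x e) + gmy x (phi x e) * (phix x e * (- F3e x e / F3x x e) + phie x e)) * gp x (phi x e)
          - (gpx x (phi x e) * (- F3e x e / F3x x e) + gpy x (phi x e) * (phix x e * (- F3e x e / F3x x e) + phie x e)) * gm x (phi x e))
          / (gp x (phi x e))²) a e).
      - assert (he3 : Rabs e < d3) by lra. pose proof (had1 e he3).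
        destruct (Ha e he3) as [_ [_ [nz _]]].
        pose proof (gpab e he) as gz.
        apply ct2_div; [|unfold Rsqr; ctac; apply Cphi; lra|unfold Rsqr; apply Rmult_integral_contrapositive; auto].
        ctac; try (apply Cphi; lra); try (apply Cphix; lra); try (apply Cphie; lra);
          try (apply ct2_inv; [apply CF3; lra | auto]); apply CF3; lra.
      - eapply der_cont. apply Ha; lra. }
    assert (lam0 : lam 0 = 0) by (unfold lam; rewrite a0, b0, hgm0; field; auto).
    assert (Clam0 : continuity_pt lam 0) by (eapply der_cont; apply Dlam; rewrite Rabs_R0; lra).
    destruct (cont_small lam 0 Clam0 rho hrho) as [dl0 [hdl0 Hdl0]]. rewrite lam0 in Hdl0.
    pose (delta := Rmin D dl0 / 2).
    assert (hdelta : 0 < delta) by (unfold delta; pose proof (Rmin_pos _ _ hD hdl0); lra).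
    assert (hdeltaD : delta < D) by (unfold delta; pose proof (Rmin_l D dl0); pose proof (Rmin_pos _ _ hD hdl0); lra).
    assert (hdeltal : delta < dl0) by (unfold delta; pose proof (Rmin_r D dl0); pose proof (Rmin_pos _ _ hD hdl0); lra).
    exists delta, rho, a, b, lam, da, db, dlam.
    split; [auto|]. split; [auto|]. split; [auto|]. split; [auto|]. split; [auto|].
    split; [|split; [|split; [|split; [|split; [|split; [|split]]]]]].
    - intros e he. split; apply Ha; lra.
    - intros e he. split. apply Db; lra. apply Cdb; lra.
    - intros e he. split. apply Dlam; lra. apply Cdlam; lra.
    - intros e he. destruct (smallab e ltac:(lra)) as [s1 s2]. split; [auto|]. split; [auto|].
      split. { replace (lam e) with (lam e - 0) by ring. apply Hdl0. rewrite Rminus_0_r; lra. }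
      assert (he3 : Rabs e < d3) by lra.
      destruct (Ha e he3) as [_ [EF _]]. unfold F3 in EF. fold (b e) in EF.
      pose proof (gpab e ltac:(lra)) as gz.
      split. { unfold lam. field_simplify_eq; auto; try lra. }
      split. { unfold lam. field; auto. }
      unfold b. apply Hphi; lra.
    - intros e a' b' l' he ha hb hl E1 E2 E3.
      assert (Eb : b' = phi a' e) by (apply Uphi; lra).
      assert (gz : gp a' b' <> 0) by (apply gpnz; lra).
      assert (Ea : a' = a e).
      { apply Ua; try lra. unfold F3. rewrite <- Eb.
        replace (fm a' b') with (l' * fp a' b') by lra.
        replace (gm a' b') with (l' * gp a' b') by lra. ring. }
      assert (Eb' : b' = b e) by (unfold b; rewrite <- Ea; auto).
      split; auto. split; auto.
      unfold lam. rewrite <- Ea, <- Eb'. field_simplify_eq; auto; try lra.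
    - unfold da. rewrite a0, F3e0, F3x0. field; auto.
    - unfold db, da. rewrite a0, phix0, phie0. apply aux_db.
    - unfold dlam, db, da, b. rewrite a0, phi0, hgm0, phix0, phie0, F3e0, F3x0.
      unfold Rsqr. field; auto. }
  assert (Uniq1 : forall eps, 0 < eps <= eps0 -> forall x y, Rabs x <= r2 -> Rabs y <= r2 ->
          H x y eps = 0 -> Hx x y eps * fm x y + Hy x y eps * gm x y = 0 -> x = A eps /\ y = B eps).
  { intros eps heps x y hx hy E1 E2.
    assert (he : Rabs eps < d2) by (rewrite Rabs_right; lra).
    assert (Ey : y = phi x eps) by (apply Uphi; lra).
    assert (Ex : x = A eps).
    { apply UA; auto. unfold G. rewrite <- Ey. auto. }
    split; auto. unfold B. rewrite <- Ex. auto. }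
  exists r2, eps0. split; [lra|]. split; [auto|].
  exists A, B, dA, dB.
  split; [|split; [|split; [|split; [|split; [|split; [|split; [|split]]]]]]].
  - intros eps heps.
    assert (he : Rabs eps < d2) by (rewrite Rabs_right; lra).
    destruct (HA eps he) as [k1 [k2 _]].
    split; [lra|]. split.
    { assert (Rabs (B eps - 0) < r2) by (apply HB0; rewrite Rminus_0_r, Rabs_right; lra). rewrite Rminus_0_r in H0. lra. }
    split. apply Hphi; lra.
    split. exact k2. apply Uniq1; auto.
  - intros e he. split. apply HA; lra. apply HA; lra.
  - intros e he. split. apply DB; lra. apply CdB; lra.
  - auto.
  - auto.
  - unfold dA. rewrite A0, Ge0, Gx0. field; auto.
  - unfold dB. rewrite A0, phix0, phie0. apply aux_db.
  - intros eps heps x y hx hy E. split.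
    + intros ne. destruct (Rtotal_order (Hx x y eps * fm x y + Hy x y eps * gm x y) 0) as [l|[q|g]].
      * right; auto.
      * exfalso. apply ne. destruct (Uniq1 eps heps x y hx hy E q) as [-> ->]. auto.
      * left; auto.
    + intros Q eq. injection eq as -> ->.
      assert (he : Rabs eps < d2) by (rewrite Rabs_right; lra).
      destruct (HA eps he) as [_ [k _]]. unfold G in k. fold (B eps) in k.
      destruct Q; lra.
  - exact P3.
Qed.
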